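(* Let $(T,\sigma,w)$ be an alternatingly weighted tree with vertices $v_1,\dots,v_g$ (in an arbitrary order). Then the matrix $\mathrm{Mat}(T)$ is effective, i.e. all nonzero terms $\mathrm{sgn}(\tau)\,m_{1\tau(1)}\cdots m_{g\tau(g)}$ ($\tau\in S_g$) in the expansion $\det(\mathrm{Mat}(T))=\sum_{\tau\in S_g}\mathrm{sgn}(\tau)m_{1\tau(1)}\cdots m_{g\tau(g)}$ have the same sign.
   Context: An alternatingly weighted tree $(T,\sigma,w)$ consists of: a finite graph $T$ that is a disjoint union of trees, with vertex set $V(T)$; a map $\sigma:V(T)\to\{\pm1\}$ such that $\sigma(v_1)=-\sigma(v_2)$ whenever $v_1,v_2$ are joined by an edge; and a map $w:V(T)\to\{0,1,\infty\}$. For each vertex $v_i$ write $w(v_i)=a(i)/b(i)$ with $(a(i),b(i))=(1,1)$ if $w(v_i)=1$, $(0,1)$ if $w(v_i)=0$, and $(1,0)$ if $w(v_i)=\infty$. The $g\times g$ matrix $\mathrm{Mat}(T)=(m_{ij})$ has diagonal entries $m_{ii}=\sigma(v_i)a(i)$; for each edge joining $v_i$ and $v_j$ with $i<j$, $m_{ij}=b(i)$ and $m_{ji}=b(j)$; all other entries are $0$. A square matrix is called effective if all nonzero terms of its determinant expansion have constant sign (all positive or all negative). *)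

(* Defs.v *)
From mathcomp Require Import all_boot all_order all_algebra all_fingroup.
Set Implicit Arguments. Unset Strict Implicit. Unset Printing Implicit Defensive.
Import Order.TTheory GRing.Theory Num.Theory.
Local Open Scope ring_scope.

Inductive weight := W0 | W1 | Winf.

(* w = a/b with (a,b) = (0,1), (1,1), (1,0). *)
Definition wnum (x : weight) : int :=
  match x with W0 => 0 | W1 => 1 | Winf => 1 end.
Definition wden (x : weight) : int :=
  match x with W0 => 1 | W1 => 1 | Winf => 0 end.

(* A simple graph on 'I_g given by a symmetric irreflexive relation is a
   forest (disjoint union of trees) iff it has no cycle, i.e. no
   duplicate-free closed walk of length >= 3. *)
Definition is_forest (g : nat) (e : rel 'I_g) : Prop :=
  symmetric e /\ irreflexive e /\
  forall c : seq 'I_g, uniq c -> (2 < size c)%N -> ~~ path.cycle e c.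

(* Alternatingly weighted tree on vertex set 'I_g (v_(i+1) <-> i). *)
Definition alt_weighted_tree (g : nat) (e : rel 'I_g)
    (sigma : 'I_g -> int) : Prop :=
  is_forest e /\
  (forall i, sigma i = 1 \/ sigma i = -1) /\
  (forall i j, e i j -> sigma i = - sigma j).

(* Mat(T): diagonal sigma(v_i) a(i); for an edge {v_i,v_j}, i<j,
   m_ij = b(i), m_ji = b(j), i.e. the (i,j) entry is b(i) whenever i,j adjacent;
   other entries 0. *)
Definition MatT (g : nat) (e : rel 'I_g) (sigma : 'I_g -> int)
    (w : 'I_g -> weight) : 'M[int]_g :=
  \matrix_(i, j)
    if i == j then sigma i * wnum (w i)
    else if e i j then wden (w i) else 0.

Definition det_term (n : nat) (A : 'M[int]_n) (tau : 'S_n) : int :=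
  (-1) ^+ tau * \prod_(i < n) A i (tau i).

(* Effective: all nonzero terms of the determinant expansion have the same
   sign (equivalently: no two terms have strictly opposite signs). *)
Definition effective (n : nat) (A : 'M[int]_n) : Prop :=
  forall tau tau' : 'S_n, 0 <= det_term A tau * det_term A tau'.

(* Main.v *)
Require Import Defs.
From mathcomp Require Import all_boot all_order all_algebra all_fingroup.
Set Implicit Arguments. Unset Strict Implicit. Unset Printing Implicit Defensive.
Import Order.TTheory GRing.Theory Num.Theory.
Local Open Scope ring_scope.

Lemma invol_sign (n : nat) (s : 'I_n -> int) : (forall i, s i * s i = 1) ->
  forall k (t : 'S_n), (#|[pred x | t x != x]| <= k)%N ->
  (forall i, t (t i) = i) -> (forall i, t i != i -> s i = - s (t i)) ->
  (-1) ^+ t * \prod_i (if t i == i then 1 else s i) = 1.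
Proof.
move=> s2; elim=> [|k IH] t.
  rewrite leqn0 => /eqP /card0_eq H _ _.
  have -> : t = 1%g by apply/permP => x; rewrite perm1; move: (H x); rewrite !inE => /negbFE/eqP.
  by rewrite odd_perm1 expr0 mul1r big1 // => i _; rewrite perm1 eqxx.
move=> Hk inv alt.
have [Hall|] := boolP [forall x, t x == x].
  have -> : t = 1%g by apply/permP => x; rewrite perm1; apply/eqP; move/forallP: Hall.
  by rewrite odd_perm1 expr0 mul1r big1 // => i _; rewrite perm1 eqxx.
rewrite negb_forall => /existsP [i Hi].
set j := t i.
have ij : i != j by rewrite eq_sym.
have tj : t j = i by rewrite /j inv.
pose t' := (t * tperm i j)%g.
have t'E x : t' x = tperm i j (t x) by rewrite permM.
have t'i : t' i = i by rewrite t'E -/j tpermR.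
have t'j : t' j = j by rewrite t'E tj tpermL.
have t'o x : x != i -> x != j -> t' x = t x.
  move=> xi xj; rewrite t'E tpermD //.
    by apply: contra xj => /eqP h; rewrite -(inv x) -h.
  by apply: contra xi => /eqP h; rewrite -(inv x) -h tj.
have fix' x : t' x != x -> [/\ x != i, x != j & t' x = t x].
  move=> H; have xi : x != i by apply: contra H => /eqP ->; rewrite t'i.
  have xj : x != j by apply: contra H => /eqP ->; rewrite t'j.
  by split => //; apply: t'o.
have inv' x : t' (t' x) = x.
  have [->|xi] := eqVneq x i; first by rewrite !t'i.
  have [->|xj] := eqVneq x j; first by rewrite !t'j.
  rewrite (t'o x) // t'o ?inv //.
    by apply: contra xj => /eqP h; rewrite -(inv x) h.
  by apply: contra xi => /eqP h; rewrite -(inv x) h tj.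
have alt' x : t' x != x -> s x = - s (t' x).
  move=> H; have [_ _ E] := fix' x H; rewrite E; apply: alt; by rewrite -E.
have card' : (#|[pred x | t' x != x]| <= k)%N.
  rewrite -ltnS; apply: leq_trans Hk; apply: proper_card; apply/properP; split.
    apply/subsetP => x; rewrite !inE => H; have [_ _ E] := fix' x H; by rewrite -E.
  by exists i; rewrite !inE ?t'i ?eqxx.
have := IH t' card' inv' alt'.
have odd' : odd_perm t = ~~ odd_perm t'.
  by rewrite odd_permM odd_tperm ij addbT negbK.
have prodE : \prod_i (if t i == i then 1 else s i) =
    - \prod_i (if t' i == i then 1 else s i).
  rewrite (bigD1 i) //= (bigD1 j) //= [in RHS](bigD1 i) //= [in RHS](bigD1 j) //=.
  rewrite t'i t'j tj !eqxx (negbTE Hi) (negbTE ij).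
  rewrite (alt i Hi) -/j mulNr !mulrA s2 !mul1r; congr (- _).
  by apply: eq_bigr => x /andP [xi xj]; rewrite t'o.
move=> H; rewrite -[RHS]H prodE odd'.
by case: (odd_perm t') => /=; rewrite ?expr0 ?expr1 ?mulN1r ?mul1r ?opprK.
Qed.

Lemma no_long_cycle (g : nat) (e : rel 'I_g) (t : 'S_g) :
  is_forest e -> (forall i, t i != i -> e i (t i)) -> forall i, t (t i) = i.
Proof.
move=> [_ [_ nocyc]] He i; apply/eqP; apply/negPn/negP => Hi.
have Hti : t i != i by apply: contra Hi => /eqP E; rewrite !E.
have injt : injective t := @perm_inj _ t.
suff [H1 H2] : (2 < size (fingraph.orbit t i))%N /\ path.cycle e (fingraph.orbit t i).
  by move: (nocyc _ (orbit_uniq t i) H1); rewrite H2.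
split.
  rewrite size_orbit; have := iter_order injt i; have := fingraph.order_gt0 t i.
  case: (fingraph.order t i) => [|[|[|n]]] //= _ E.
    by move: Hti; rewrite E eqxx.
  by move: Hi; rewrite E eqxx.
apply: (@sub_in_cycle _ [pred x | t x != x] (frel t)).
- by move=> x y Hx _ /= /eqP <-; apply: He.
- apply/allP => x; rewrite -fconnect_orbit => Hx; rewrite inE.
  apply/negP => /eqP Htx.
  have := fconnect_invariant (k := fun y => y == x) _ Hx.
  rewrite eqxx => /(_ _) /eqP Eix.
  suff Hin : invariant t (eq_op^~ x) =1 xpredT.
    by move: Hti; rewrite (Eix Hin) Htx eqxx.
  move=> y /=; rewrite /invariant /=.
  by rewrite -{1}Htx (inj_eq injt) eqxx.
- exact: cycle_orbit.
Qed.

Theorem proposition5p1 (g : nat) (e : rel 'I_g) (sigma : 'I_g -> int)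
    (w : 'I_g -> weight) :
  alt_weighted_tree e sigma -> effective (MatT e sigma w).
Proof.
move=> [forest [sig alt]].
have s2 : forall i, sigma i * sigma i = 1 by move=> i; case: (sig i) => ->.
set S := \prod_i sigma i.
have SS : S * S = 1 by rewrite /S -big_split /= big1.
set A := MatT e sigma w.
have key : forall t : 'S_g, 0 <= S * det_term A t.
  move=> t; rewrite /det_term.
  have [Z|NZ] := eqVneq (\prod_i A i (t i)) 0; first by rewrite Z !mulr0.
  have nz : forall i, A i (t i) != 0 by move=> i; by move/prodf_neq0: NZ; apply.
  have edge : forall i, t i != i -> e i (t i).
    move=> i Hi; move: (nz i); rewrite /A /MatT mxE; have -> : (i == t i) = false by rewrite eq_sym (negbTE Hi).
    by case: (e i (t i)); rewrite ?eqxx.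
  have inv := no_long_cycle forest edge.
  have alt' : forall i, t i != i -> sigma i = - sigma (t i).
    by move=> i Hi; apply: alt; apply: edge.
  have L := invol_sign s2 (leqnn _) inv alt'.
  pose F i := if t i == i then 1 else sigma i.
  pose d i := (if t i == i then sigma i else 1) * A i (t i).
  have Hd : forall i, 0 <= d i.
    move=> i; rewrite /d /A /MatT mxE.
    case: eqP => [E|NE].
      by rewrite E eqxx mulrA s2 mul1r; case: (w i).
    have -> : (i == t i) = false by apply/eqP => E; apply: NE; rewrite -E.
    by rewrite mul1r; case: (e i (t i)) => //; case: (w i).
  rewrite mulrCA /S -big_split /=.
  rewrite (eq_bigr (fun i => F i * d i)); last first.
    by move=> i _; rewrite /F /d; case: (t i == i); rewrite ?mul1r // mulrA.
  by rewrite big_split /= mulrA L mul1r; apply: prodr_ge0 => i _; apply: Hd.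
move=> t t'.
rewrite -[det_term A t * _]mul1r -SS mulrACA.
by apply: mulr_ge0; apply: key.
Qed.
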